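(* Let $h>0$ satisfy $L_eh^2\le1/9$, where $L_e=L+2\epsilon\tilde L$. For $x,v\in\mathbb{R}^{Nd}$ and $\mathcal U_0\sim\mathrm{Unif}[0,1]$, let $Q_h(x,v)=x+hv-\frac{h^2}2\nabla U(x+h\mathcal U_0v)$ and $P_h(x,v)=v-h\nabla U(x+h\mathcal U_0v)$ (one step of the randomized integrator). Then $$\sum_{\ell=1}^N\big|\!\big|\!\big|\mathbb{E}[(Q^\ell_h(x,v),P^\ell_h(x,v))]-(q^\ell_h(x,v),p^\ell_h(x,v))\big|\!\big|\!\big|^2\le7(L_eh^2)^3\sum_{\ell=1}^N\Big(|\!|\!|(x^\ell,v^\ell)|\!|\!|^2+\frac13L_e^{-2}\epsilon^2\mathbf W_0^2\Big),$$ where $\mathbf W_0=|\nabla_1W(0,0)|$.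
   Context: Standing assumptions: $\epsilon\ge0$; $V:\mathbb{R}^d\to\mathbb{R}$, $W:\mathbb{R}^d\times\mathbb{R}^d\to\mathbb{R}$ are $C^1$, $\nabla_1W$ the gradient in the first argument, constants $L>0$, $\tilde L\ge0$ with: (a) $V(0)=0$, $V\ge0$; (b) $|\nabla V(x)-\nabla V(y)|\le L|x-y|$; (d) $W$ symmetric, $|\nabla_1W(x,y)-\nabla_1W(\tilde x,\tilde y)|\le\tilde L(|x-\tilde x|+|y-\tilde y|)$. Points of $\mathbb{R}^{Nd}$: $x=(x^1,\dots,x^N)$. $U(x)=\sum_i\big(V(x^i)+\frac\epsilon{2N}\sum_jW(x^i,x^j)\big)$, $\nabla U=(\nabla_1U,\dots,\nabla_NU)$ with $\nabla_iU=\partial U/\partial x^i$. Exact flow $(q_t,p_t)(x,v)$: $\dot q^i_t=p^i_t$, $\dot p^i_t=-\nabla_iU(q_t)$, $(q_0,p_0)=(x,v)$. For $(a,b)\in\mathbb{R}^{2d}$, $|\!|\!|(a,b)|\!|\!|^2=|a|^2+L_e^{-1}|b|^2$. *)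

(* Defs.v *)
From Stdlib Require Import Reals.
From Coquelicot Require Import Coquelicot.
From mathcomp Require Import ssreflect ssrfun ssrbool eqtype ssrnat seq fintype bigop.

Set Implicit Arguments.
Unset Strict Implicit.
Local Open Scope R_scope.

Definition vec (d : nat) := 'I_d -> R.
(* points of R^{Nd} = (R^d)^N, x = (x^1,...,x^N) *)
Definition config (N d : nat) := 'I_N -> vec d.

Definition rsum (n : nat) (f : 'I_n -> R) : R := \big[Rplus/0]_(k < n) f k.

Definition vsub d (a b : vec d) : vec d := fun k => a k - b k.
Definition vzero d : vec d := fun _ => 0.

Definition sqnorm d (a : vec d) : R := rsum (fun k => a k ^ 2).
Definition enorm d (a : vec d) : R := sqrt (sqnorm a).

Definition tnorm2 d (Le : R) (a b : vec d) : R := sqnorm a + / Le * sqnorm b.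

Definition shift d (x : vec d) (k : 'I_d) (t : R) : vec d :=
  fun j => if j == k then x j + t else x j.
Definition partial d (f : vec d -> R) (x : vec d) (k : 'I_d) : R :=
  Derive (fun t => f (shift x k t)) 0.
Definition grad d (f : vec d -> R) (x : vec d) : vec d := fun k => partial f x k.

Definition grad1 d (W : vec d -> vec d -> R) (x y : vec d) : vec d :=
  grad (fun z => W z y) x.
Definition grad2 d (W : vec d -> vec d -> R) (x y : vec d) : vec d :=
  grad (fun z => W x z) y.

Definition isC1 d (f : vec d -> R) : Prop :=
  (forall x k, ex_derive (fun t => f (shift x k t)) 0) /\
  (forall x eps, 0 < eps -> exists delta, 0 < delta /\
     forall y, enorm (vsub y x) < delta -> enorm (vsub (grad f y) (grad f x)) < eps).

Definition isC1_2 d (W : vec d -> vec d -> R) : Prop :=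
  (forall x y k, ex_derive (fun t => W (shift x k t) y) 0) /\
  (forall x y k, ex_derive (fun t => W x (shift y k t)) 0) /\
  (forall x y eps, 0 < eps -> exists delta, 0 < delta /\
     forall x' y', enorm (vsub x' x) + enorm (vsub y' y) < delta ->
       enorm (vsub (grad1 W x' y') (grad1 W x y)) < eps /\
       enorm (vsub (grad2 W x' y') (grad2 W x y)) < eps).

Definition Upot N d (eps : R) (V : vec d -> R) (W : vec d -> vec d -> R)
  (x : config N d) : R :=
  rsum (fun i => V (x i) + eps / (2 * INR N) * rsum (fun j => W (x i) (x j))).

Definition cshift N d (x : config N d) (i : 'I_N) (k : 'I_d) (t : R) : config N d :=
  fun i' k' => if (i' == i) && (k' == k) then x i' k' + t else x i' k'.
Definition cgrad N d (f : config N d -> R) (x : config N d) : config N d :=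
  fun i k => Derive (fun t => f (cshift x i k t)) 0.

Definition caxpy N d (x : config N d) (c : R) (v : config N d) : config N d :=
  fun i k => x i k + c * v i k.

(* the exact Hamiltonian flow (q_t,p_t)(x,v) (any solution on R of the ODE) *)
Definition is_flow N d (gU : config N d -> config N d)
  (x v : config N d) (q p : R -> config N d) : Prop :=
  (forall i k, q 0 i k = x i k) /\ (forall i k, p 0 i k = v i k) /\
  (forall t i k, is_derive (fun s => q s i k) t (p t i k)) /\
  (forall t i k, is_derive (fun s => p s i k) t (- gU (q t) i k)).

(* expectations over U0 ~ Unif[0,1] of the randomized integrator step *)
Definition EQh N d (gU : config N d -> config N d) (h : R) (x v : config N d)
  : config N d :=
  fun l k => RInt (fun u => x l k + h * v l k
                             - h ^ 2 / 2 * gU (caxpy x (h * u) v) l k) 0 1.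
Definition EPh N d (gU : config N d -> config N d) (h : R) (x v : config N d)
  : config N d :=
  fun l k => RInt (fun u => v l k - h * gU (caxpy x (h * u) v) l k) 0 1.

(* Main.v *)
Require Import Defs.
From Stdlib Require Import Reals.
From Coquelicot Require Import Coquelicot.
From mathcomp Require Import ssreflect ssrfun ssrbool eqtype ssrnat seq fintype bigop.
From HB Require Import structures.
From Stdlib Require Import Lra FunctionalExtensionality.
Local Open Scope R_scope.
Set Implicit Arguments.
Unset Strict Implicit.

HB.instance Definition _ := Monoid.isComLaw.Build R 0 Rplus
  (fun a b c => esym (Rplus_assoc a b c)) Rplus_comm Rplus_0_l.

Section Sums.
Variable n : nat.
Implicit Types f g : 'I_n -> R.

Lemma rsum_delta (i : 'I_n) f :
  rsum (fun j => if j == i then f j else 0) = f i.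
Proof.
rewrite /rsum (bigD1 i) //= eqxx big1 ?Rplus_0_r // => j /negPf -> //.
Qed.

Lemma rsum_delta' (i : 'I_n) f :
  rsum (fun j => if i == j then f j else 0) = f i.
Proof.
rewrite -(rsum_delta i f) /rsum; apply: eq_bigr => j _; by rewrite eq_sym.
Qed.

Lemma rsum_ext f g : (forall j, f j = g j) -> rsum f = rsum g.
Proof. by move=> H; rewrite /rsum; apply: eq_bigr => j _. Qed.

Lemma rsum_plus f g : rsum (fun j => f j + g j) = rsum f + rsum g.
Proof. by rewrite /rsum big_split. Qed.

Lemma rsum_scal c f : rsum (fun j => c * f j) = c * rsum f.
Proof.
rewrite /rsum; apply: (big_rec2 (fun y1 y2 => y1 = c * y2)); first by ring.
by move=> i y1 y2 _ ->; ring.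
Qed.

Lemma rsum_le f g : (forall j, f j <= g j) -> rsum f <= rsum g.
Proof.
move=> H; rewrite /rsum; apply: (big_rec2 (fun y1 y2 => y1 <= y2)); first lra.
by move=> i y1 y2 _ Hy; have := H i; lra.
Qed.

Lemma rsum_ge0 f : (forall j, 0 <= f j) -> 0 <= rsum f.
Proof.
move=> H; rewrite /rsum; apply: (big_rec (fun y => 0 <= y)); first lra.
by move=> i y _ Hy; have := H i; lra.
Qed.

Lemma rsum_const c : rsum (fun _ : 'I_n => c) = INR n * c.
Proof.
rewrite /rsum big_const_ord; elim: n => [|m IH] /=; first ring.
rewrite IH; case: m {IH} => [|m] /=; ring.
Qed.

Lemma rsum_minus f g : rsum (fun j => f j - g j) = rsum f - rsum g.
Proof.
have -> : rsum (fun j => f j - g j) = rsum (fun j => f j + (-1) * g j)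
  by apply: rsum_ext => j; ring.
rewrite rsum_plus rsum_scal; ring.
Qed.

Lemma is_derive_rsum (F F' : 'I_n -> R -> R) t :
  (forall j, is_derive (F j) t (F' j t)) ->
  is_derive (fun s => rsum (fun j => F j s)) t (rsum (fun j => F' j t)).
Proof.
move=> H; rewrite /rsum; elim: (index_enum _) => [|j r IH].
  apply: (is_derive_ext (fun _ => 0)); first by move=> s; rewrite big_nil.
  rewrite big_nil; apply: is_derive_const.
apply: (is_derive_ext (fun s => F j s + \big[Rplus/0]_(i <- r) F i s)).
  by move=> s; rewrite big_cons.
rewrite big_cons; apply: is_derive_plus => //.
Qed.

End Sums.

Lemma quad_cs A B C : 0 <= B -> (forall s, 0 <= A + 2*s*C + s^2*B) -> C^2 <= A*B.
Proof.
move=> HB H.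
case: (Rle_lt_or_eq_dec _ _ HB) => HB'.
  have := H (-C/B).
  have -> : A + 2 * (- C / B) * C + (- C / B) ^ 2 * B = (A*B - C^2) / B
    by field; lra.
  move=> H2; have : 0 <= (A*B - C^2)/B * B by apply: Rmult_le_pos; lra.
  have -> : (A*B - C^2)/B * B = A*B - C^2 by field; lra.
  lra.
subst B.
case: (Req_dec C 0) => HC; first by subst; nra.
have := H (-(A+1)/(2*C)).
have -> : A + 2 * (- (A + 1) / (2 * C)) * C + (- (A + 1) / (2 * C)) ^ 2 * 0 = -1
  by field.
lra.
Qed.

Lemma cs_sum n (a b : 'I_n -> R) :
  rsum (fun j => a j * b j) <= sqrt (rsum (fun j => a j ^ 2)) * sqrt (rsum (fun j => b j ^ 2)).
Proof.
set C := rsum (fun j => a j * b j); set A := rsum (fun j => a j ^ 2); set B := rsum (fun j => b j ^ 2).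
have HA : 0 <= A by apply: rsum_ge0 => j; apply: pow2_ge_0.
have HB : 0 <= B by apply: rsum_ge0 => j; apply: pow2_ge_0.
have HC : C^2 <= A * B.
  apply: quad_cs => // s.
  have -> : A + 2 * s * C + s ^ 2 * B = rsum (fun j => (a j + s * b j) ^ 2).
    rewrite /A /B /C -rsum_scal -rsum_scal -!rsum_plus; apply: rsum_ext => j; ring.
  apply: rsum_ge0 => j; apply: pow2_ge_0.
case: (Rle_or_lt C 0) => HC0.
  have : 0 <= sqrt A * sqrt B by apply: Rmult_le_pos; apply: sqrt_pos.
  lra.
rewrite -sqrt_mult //.
rewrite -(sqrt_pow2 C); last lra.
by apply: sqrt_le_1_alt.
Qed.

Section Norms.
Variable d : nat.
Implicit Types a b : vec d.

Lemma sqnorm_ge0 a : 0 <= sqnorm a.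
Proof. apply: rsum_ge0 => j; apply: pow2_ge_0. Qed.

Lemma enorm_ge0 a : 0 <= enorm a.
Proof. apply: sqrt_pos. Qed.

Lemma enorm_sq a : enorm a ^ 2 = sqnorm a.
Proof. rewrite /enorm /= Rmult_1_r sqrt_sqrt //; apply: sqnorm_ge0. Qed.

Lemma enorm_ext a b : (forall k, a k = b k) -> enorm a = enorm b.
Proof. move=> H; rewrite /enorm /sqnorm; f_equal; apply: rsum_ext => k; by rewrite H. Qed.

Lemma enorm_dot a b : rsum (fun k => a k * b k) <= enorm a * enorm b.
Proof. apply: cs_sum. Qed.

Lemma enorm_triangle a b : enorm (fun k => a k + b k) <= enorm a + enorm b.
Proof.
have Ha := enorm_ge0 a; have Hb := enorm_ge0 b.
rewrite {1}/enorm -(sqrt_pow2 (enorm a + enorm b)); last lra.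
apply: sqrt_le_1_alt.
have -> : sqnorm (fun k => a k + b k) = sqnorm a + 2 * rsum (fun k => a k * b k) + sqnorm b.
  rewrite /sqnorm -rsum_scal -!rsum_plus; apply: rsum_ext => k; ring.
have := enorm_dot a b; rewrite -(enorm_sq a) -(enorm_sq b). nra.
Qed.

Lemma enorm_scal c a : enorm (fun k => c * a k) = Rabs c * enorm a.
Proof.
rewrite /enorm /sqnorm (@rsum_ext _ (fun k => (c * a k) ^ 2) (fun k => c^2 * a k ^ 2)); last by move=> k; ring.
rewrite rsum_scal sqrt_mult; [|apply: pow2_ge_0|apply: (sqnorm_ge0 a)].
by rewrite -sqrt_Rsqr_abs /Rsqr /= Rmult_1_r.
Qed.

Lemma enorm_coord a k : Rabs (a k) <= enorm a.
Proof.
rewrite -sqrt_Rsqr_abs; apply: sqrt_le_1_alt.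
rewrite /Rsqr.
have -> : a k * a k = a k ^ 2 by ring.
rewrite -(@rsum_delta _ k (fun j => a j ^ 2)).
apply: rsum_le => j; case: (j == k); first lra. apply: pow2_ge_0.
Qed.

Lemma enorm_mono a b : (forall k, 0 <= a k <= b k) -> enorm a <= enorm b.
Proof.
move=> H; apply: sqrt_le_1_alt; apply: rsum_le => k; have := H k.
move=> [H1 H2]; apply: pow_incr; lra.
Qed.

Lemma enorm_zero : enorm (fun _ : 'I_d => 0) = 0.
Proof.
rewrite /enorm /sqnorm (@rsum_ext _ _ (fun _ => 0)); last by move=> k; ring.
by rewrite rsum_const Rmult_0_r sqrt_0.
Qed.

Lemma enorm_sub_sym a b : enorm (vsub a b) = enorm (vsub b a).
Proof.
have -> : enorm (vsub a b) = enorm (fun k => (-1) * vsub b a k).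
  by apply: enorm_ext => k; rewrite /vsub; ring.
rewrite enorm_scal Rabs_Ropp Rabs_R1; ring.
Qed.

Lemma enorm_sum n (f : 'I_n -> vec d) :
  enorm (fun k => rsum (fun j => f j k)) <= rsum (fun j => enorm (f j)).
Proof.
rewrite /rsum; elim: (index_enum _) => [|j r IH].
  rewrite big_nil (enorm_ext (b:=fun _ => 0)) ?enorm_zero; first lra.
  by move=> k; rewrite big_nil.
rewrite big_cons (enorm_ext (b:=fun k => f j k + \big[Rplus/0]_(i <- r) f i k)).
  by apply: Rle_trans (enorm_triangle _ _) _; apply: Rplus_le_compat_l; exact: IH.
by move=> k; rewrite big_cons.
Qed.

End Norms.

Definition cnorm N d (y : config N d) : R := enorm (fun i => enorm (y i)).

Section CNorms.
Variables N d : nat.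
Implicit Types y z : config N d.

Lemma cnorm_ge0 y : 0 <= cnorm y.
Proof. apply: enorm_ge0. Qed.

Lemma cnorm_sq y : cnorm y ^ 2 = rsum (fun i => sqnorm (y i)).
Proof.
rewrite /cnorm enorm_sq /sqnorm; apply: rsum_ext => i; by rewrite enorm_sq.
Qed.

Lemma cnorm_ext y z : (forall i k, y i k = z i k) -> cnorm y = cnorm z.
Proof. move=> H; apply: enorm_ext => i; apply: enorm_ext => k; apply: H. Qed.

Lemma cnorm_triangle y z : cnorm (fun i k => y i k + z i k) <= cnorm y + cnorm z.
Proof.
apply: Rle_trans (enorm_triangle _ _).
apply: enorm_mono => i; split; first by apply: enorm_ge0.
apply: enorm_triangle.
Qed.

Lemma cnorm_scal c y : cnorm (fun i k => c * y i k) = Rabs c * cnorm y.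
Proof.
rewrite /cnorm (enorm_ext (b:=fun i => Rabs c * enorm (y i))); last by move=> i; rewrite enorm_scal.
by rewrite enorm_scal Rabs_Rabsolu.
Qed.

Lemma cnorm_coord y i k : Rabs (y i k) <= cnorm y.
Proof.
apply: Rle_trans (enorm_coord _ k) _.
have := enorm_coord (fun i => enorm (y i)) i.
rewrite Rabs_pos_eq //; apply: enorm_ge0.
Qed.

Lemma cnorm_dot y z :
  rsum (fun i => rsum (fun k => y i k * z i k)) <= cnorm y * cnorm z.
Proof.
apply: Rle_trans (enorm_dot _ _).
apply: rsum_le => i; apply: enorm_dot.
Qed.

Lemma cnorm_zero : cnorm (fun (_ : 'I_N) (_ : 'I_d) => 0) = 0.
Proof.
rewrite /cnorm (enorm_ext (b:=fun _ => 0)) ?enorm_zero // => i.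
Qed.

End CNorms.

Section Deriv.
Implicit Types f g : R -> R.

Lemma D_val f t (l l' : R) : is_derive f t l -> l = l' -> is_derive f t l'.
Proof. by move=> H <-. Qed.

Lemma D_ext f g t l : (forall s, f s = g s) -> is_derive f t l -> is_derive g t l.
Proof. move=> H; exact: is_derive_ext. Qed.

Lemma D_const c t : is_derive (fun _ => c) t 0.
Proof. exact: (is_derive_const c t). Qed.

Lemma D_id t : is_derive (fun s => s) t 1.
Proof. exact: (is_derive_id t). Qed.

Lemma D_plus f g t a b : is_derive f t a -> is_derive g t b ->
  is_derive (fun s => f s + g s) t (a + b).
Proof. move=> Hf Hg; exact: (is_derive_plus f g t a b Hf Hg). Qed.

Lemma D_minus f g t a b : is_derive f t a -> is_derive g t b ->
  is_derive (fun s => f s - g s) t (a - b).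
Proof. move=> Hf Hg; exact: (is_derive_minus f g t a b Hf Hg). Qed.

Lemma D_opp f t a : is_derive f t a -> is_derive (fun s => - f s) t (- a).
Proof. move=> Hf; exact: (is_derive_opp f t a Hf). Qed.

Lemma D_mult f g t a b : is_derive f t a -> is_derive g t b ->
  is_derive (fun s => f s * g s) t (a * g t + f t * b).
Proof. move=> Hf Hg; apply: (is_derive_mult f g t a b Hf Hg) => m n; exact: Rmult_comm. Qed.

Lemma D_mulc f t a c : is_derive f t a -> is_derive (fun s => f s * c) t (a * c).
Proof. move=> Hf; have H := D_mult Hf (D_const c t); rewrite (_ : a * c = a * c + f t * 0); [exact: H | ring]. Qed.

Lemma D_cmul f t a c : is_derive f t a -> is_derive (fun s => c * f s) t (c * a).
Proof. move=> Hf; have H := D_mult (D_const c t) Hf; rewrite (_ : c * a = 0 * f t + c * a); [exact: H | ring]. Qed.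

Lemma D_cont f t l : is_derive f t l -> continuity_pt f t.
Proof.
move=> H; apply/continuity_pt_filterlim; apply: ex_derive_continuous; by exists l.
Qed.

Lemma mono_deriv f f' T : 0 <= T ->
  (forall s, 0 <= s <= T -> is_derive f s (f' s)) ->
  (forall s, 0 <= s <= T -> f' s <= 0) -> f T <= f 0.
Proof.
move=> HT Hd Hn.
have [c [Hc Heq]] : exists c, Rmin 0 T <= c <= Rmax 0 T /\ f T - f 0 = f' c * (T - 0).
  apply: MVT_gen => s; rewrite Rmin_left // Rmax_right // => Hs.
    apply: Hd; lra.
  apply: D_cont; apply: Hd; lra.
move: Hc; rewrite Rmin_left // Rmax_right // => Hc.
have := Hn c Hc; nra.
Qed.

End Deriv.

Lemma vmvt N d T (g g' : R -> config N d) (b b' : R -> R) : 0 <= T ->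
  (forall s, 0 <= s <= T -> forall i k, is_derive (fun s => g s i k) s (g' s i k)) ->
  (forall s, 0 <= s <= T -> is_derive b s (b' s)) ->
  (forall s, 0 <= s <= T -> cnorm (g' s) <= b' s) ->
  cnorm (fun i k => g T i k - g 0 i k) <= b T - b 0.
Proof.
move=> HT Hg Hb Hbd.
set D := fun i k => g T i k - g 0 i k.
set nD := cnorm D.
have HnD : 0 <= nD by apply: cnorm_ge0.
have Hbm : b T >= b 0.
  suff : (fun s => - b s) T <= (fun s => - b s) 0 by move=> /=; lra.
  apply: (mono_deriv (f := fun s => - b s) (f' := fun s => - b' s)) => // s Hs.
    by apply: D_opp; apply: Hb.
  have := Hbd s Hs; have := cnorm_ge0 (g' s); lra.
set phi := fun s => rsum (fun i => rsum (fun k => (g s i k - g 0 i k) * D i k)) - b s * nD.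
have Hphi : phi T <= phi 0.
  apply: (mono_deriv (f := phi) (f' := fun s => rsum (fun i => rsum (fun k => g' s i k * D i k)) - b' s * nD)) => //.
    move=> s Hs; apply: D_minus; last by apply: D_mulc; apply: Hb.
    apply: (is_derive_rsum (F := fun i s => rsum (fun k => (g s i k - g 0 i k) * D i k)) (F' := fun i t => rsum (fun k => g' t i k * D i k))) => i.
    apply: (is_derive_rsum (F := fun k s => (g s i k - g 0 i k) * D i k) (F' := fun k t => g' t i k * D i k)) => k.
    apply: D_mulc; apply: D_val; first by apply: D_minus; [apply: Hg | apply: D_const].
    exact: Rminus_0_r.
  move=> s Hs; have := cnorm_dot (g' s) D; have := Hbd s Hs.
  rewrite -/nD => H1 H2; nra.
move: Hphi; rewrite /phi.
rewrite (@rsum_ext _ (fun i => rsum (fun k => (g 0 i k - g 0 i k) * D i k)) (fun _ => 0)); last first.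
  move=> i; rewrite (@rsum_ext _ _ (fun _ => 0)) ?rsum_const; last by move=> k; ring.
  ring.
rewrite rsum_const.
have -> : rsum (fun i => rsum (fun k => (g T i k - g 0 i k) * D i k)) = nD ^ 2.
  rewrite /nD cnorm_sq; apply: rsum_ext => i; apply: rsum_ext => k; rewrite /D; ring.
move=> H.
have : nD ^ 2 <= (b T - b 0) * nD by lra.
move=> H2; nra.
Qed.

Section Shift.
Variable d : nat.

Lemma shift0 (a : vec d) k : shift a k 0 = a.
Proof.
apply: functional_extensionality => j; rewrite /shift; case: (j == k) => //; ring.
Qed.

Lemma shift_shift (a : vec d) k s t : shift (shift a k s) k t = shift a k (s + t).
Proof.
apply: functional_extensionality => j; rewrite /shift; case: (j == k) => //; ring.
Qed.

Lemma enorm_shift (a : vec d) k u : enorm (vsub (shift a k u) a) = Rabs u.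
Proof.
rewrite /enorm /sqnorm (@rsum_ext _ _ (fun j => if j == k then u ^ 2 else 0)).
  rewrite (@rsum_delta _ k (fun _ => u ^ 2)) -sqrt_Rsqr_abs /Rsqr /=; f_equal; ring.
move=> j; rewrite /vsub /shift; case: (j == k); ring.
Qed.

Lemma partial_any (f : vec d -> R) k a s :
  (forall y, ex_derive (fun t => f (shift y k t)) 0) ->
  is_derive (fun t => f (shift a k t)) s (grad f (shift a k s) k).
Proof.
move=> Hex.
set h := fun u => f (shift (shift a k s) k u).
have Hh : is_derive h (s - s) (grad f (shift a k s) k).
  rewrite Rminus_diag_eq //; apply: Derive_correct; apply: Hex.
have := is_derive_comp h (fun t => t - s) s _ _ Hh (D_minus (D_id s) (D_const s s)).
move=> H; apply: (is_derive_ext (fun t => h (t - s))).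
  move=> t; rewrite /h shift_shift; f_equal; f_equal; ring.
rewrite (_ : grad f (shift a k s) k = scal (1 - 0) (grad f (shift a k s) k)) //.
rewrite /scal /= /mult /=; ring.
Qed.

End Shift.

Lemma diag_deriv d (W : vec d -> vec d -> R) Lt (a : vec d) k :
  0 <= Lt ->
  (forall x y k, ex_derive (fun t => W (shift x k t) y) 0) ->
  (forall x y, W x y = W y x) ->
  (forall x y x' y', enorm (vsub (grad1 W x y) (grad1 W x' y'))
                     <= Lt * (enorm (vsub x x') + enorm (vsub y y'))) ->
  is_derive (fun t => W (shift a k t) (shift a k t)) 0 (2 * grad1 W a a k).
Proof.
move=> HLt Hex Hsym Hlip.
set g0 := grad1 W a a k.
have Hf2 : is_derive (fun t => W (shift a k t) a) 0 g0.
  have := @partial_any _ (fun z => W z a) k a 0 (fun y => Hex y a k).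
  by rewrite shift0.
apply/is_derive_Reals => e He.
have He2 : 0 < e / 2 by lra.
move/is_derive_Reals: Hf2 => /(_ _ He2) [d2 Hd2].
have Hd1 : 0 < e / (4 * Lt + 1).
  apply: Rdiv_lt_0_compat => //; lra.
have Hdel : 0 < Rmin d2 (e / (4 * Lt + 1)).
  apply: Rmin_pos => //; apply: cond_pos.
exists (mkposreal _ Hdel) => t Ht0 Htd /=.
move: Htd => /= Htd.
have Htd2 : Rabs t < d2 by apply: Rlt_le_trans Htd (Rmin_l _ _).
have Htd1 : Rabs t < e / (4 * Lt + 1) by apply: Rlt_le_trans Htd (Rmin_r _ _).
have := Hd2 t Ht0 Htd2; rewrite !Rplus_0_l shift0 => H2.
set st := shift a k t.
have [c [Hc Heq]] : exists c, Rmin 0 t <= c <= Rmax 0 t /\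
   W (shift a k t) st - W (shift a k 0) st = grad1 W (shift a k c) st k * (t - 0).
  apply: (MVT_gen (fun u => W (shift a k u) st) 0 t (fun u => grad1 W (shift a k u) st k)) => u Hu.
    exact: (@partial_any _ (fun z => W z st) k a u (fun y => Hex y st k)).
  apply: D_cont; exact: (@partial_any _ (fun z => W z st) k a u (fun y => Hex y st k)).
rewrite shift0 -/st in Heq.
have Hc' : Rabs c <= Rabs t.
  move: Hc; rewrite /Rmin /Rmax; case: Rle_dec => Ht Hc; rewrite /Rabs;
  case: Rcase_abs => ?; case: Rcase_abs => ?; lra.
have Hgc : Rabs (grad1 W (shift a k c) st k - g0) <= 2 * Lt * Rabs t.
  apply: Rle_trans (enorm_coord (vsub (grad1 W (shift a k c) st) (grad1 W a a)) k) _.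
  apply: Rle_trans (Hlip _ _ _ _) _.
  rewrite /st !enorm_shift; have := Rmult_le_compat_l _ _ _ HLt Hc'; lra.
have -> : (W st st - W a a) / t - 2 * g0 =
          (grad1 W (shift a k c) st k - g0) +
          ((W st a - W a a) / t - g0).
  have E1 : W a st = W st a by rewrite Hsym.
  have -> : W st st = grad1 W (shift a k c) st k * t + W st a.
    rewrite -E1; lra.
  field; exact: Ht0.
apply: Rle_lt_trans (Rabs_triang _ _) _.
have : 2 * Lt * Rabs t <= 2 * Lt * (e / (4 * Lt + 1)).
  apply: Rmult_le_compat_l; lra.
have : 2 * Lt * (e / (4 * Lt + 1)) <= e / 2.
  have -> : 2 * Lt * (e / (4 * Lt + 1)) = e / 2 - e / (2 * (4 * Lt + 1)) by field; lra.
  have : 0 < e / (2 * (4 * Lt + 1)) by apply: Rdiv_lt_0_compat; lra.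
  lra.
rewrite -/st in H2; lra.
Qed.

Definition Gf N d eps (V : vec d -> R) (W : vec d -> vec d -> R) (y : config N d) : config N d :=
  fun i k => grad V (y i) k + eps / INR N * rsum (fun j => grad1 W (y i) (y j) k).

Lemma cshift_row N d (y : config N d) i k t i' :
  cshift y i k t i' = if i' == i then shift (y i) k t else y i'.
Proof.
apply: functional_extensionality => k'; rewrite /cshift /shift.
case: eqP => [->|] //=.
Qed.

Lemma rsum_zero n : rsum (fun _ : 'I_n => 0) = 0.
Proof. by rewrite rsum_const Rmult_0_r. Qed.

Lemma cgrad_U N d eps (V : vec d -> R) (W : vec d -> vec d -> R) Lt :
  0 <= Lt ->
  (forall x k, ex_derive (fun t => V (shift x k t)) 0) ->
  (forall x y k, ex_derive (fun t => W (shift x k t) y) 0) ->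
  (forall x y, W x y = W y x) ->
  (forall x y x' y', enorm (vsub (grad1 W x y) (grad1 W x' y'))
                     <= Lt * (enorm (vsub x x') + enorm (vsub y y'))) ->
  forall (y : config N d) i k, cgrad (Upot eps V W) y i k = Gf eps V W y i k.
Proof.
move=> HLt HV HW Hsym Hlip y i k.
rewrite /cgrad; apply: is_derive_unique.
set row := fun m t => if m == i then shift (y i) k t else y m.
set c := eps / (2 * INR N).
set Dw := fun i' j => (if i' == i then grad1 W (y i) (y j) k else 0) +
                      (if j == i then grad1 W (y i) (y i') k else 0).
set dV := fun i' : 'I_N => if i' == i then grad V (y i) k else 0.
apply: (is_derive_ext (fun t => rsum (fun i' => V (row i' t) + c * rsum (fun j => W (row i' t) (row j t))))).
  move=> t; rewrite /Upot; apply: rsum_ext => i'; rewrite cshift_row; f_equal; f_equal.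
  apply: rsum_ext => j; by rewrite !cshift_row.
apply: D_val.
  apply: (is_derive_rsum (F := fun i' t => V (row i' t) + c * rsum (fun j => W (row i' t) (row j t)))
            (F' := fun i' _ => dV i' + c * rsum (fun j => Dw i' j))) => i'.
  apply: D_plus.
    rewrite /row /dV; case Hii: (i' == i).
      have := @partial_any _ V k (y i) 0 (HV^~ k); by rewrite shift0.
    exact: D_const.
  apply: D_cmul.
  apply: (is_derive_rsum (F := fun j t => W (row i' t) (row j t)) (F' := fun j _ => Dw i' j)) => j.
  rewrite /row /Dw; case Hii: (i' == i); case Hji: (j == i).
  - move/eqP: Hii => ->; move/eqP: Hji => ->.
    apply: D_val; first by apply: (diag_deriv (y i) k HLt HW Hsym Hlip).
    ring.
  - rewrite /= Rplus_0_r.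
    have := @partial_any _ (fun z => W z (y j)) k (y i) 0 (fun x => HW x (y j) k); by rewrite shift0.
  - apply: (is_derive_ext (fun t => W (shift (y i) k t) (y i'))).
      move=> t; by rewrite Hsym.
    rewrite /= Rplus_0_l.
    have := @partial_any _ (fun z => W z (y i')) k (y i) 0 (fun x => HW x (y i') k); by rewrite shift0.
  - rewrite /= Rplus_0_r; exact: D_const.
rewrite rsum_plus rsum_scal /dV (@rsum_delta _ i (fun _ => grad V (y i) k)).
rewrite /Gf; f_equal.
have HN : INR N <> 0.
  have H0 : (0 < N)%nat by apply: (leq_ltn_trans (leq0n _) (ltn_ord i)).
  apply: not_0_INR => E; move: H0; by rewrite E.
rewrite (@rsum_ext _ _ (fun i' => (if i' == i then rsum (fun j => grad1 W (y i) (y j) k) else 0)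
                                  + grad1 W (y i) (y i') k)); last first.
  move=> i'; rewrite /Dw rsum_plus (@rsum_delta _ i (fun _ => grad1 W (y i) (y i') k)).
  case: (i' == i) => //; by rewrite rsum_zero.
rewrite rsum_plus (@rsum_delta _ i (fun _ => rsum (fun j => grad1 W (y i) (y j) k))).
rewrite /c; field; exact: HN.
Qed.

Lemma enorm_const n c : enorm (fun _ : 'I_n => c) = sqrt (INR n) * Rabs c.
Proof.
rewrite /enorm /sqnorm rsum_const sqrt_mult; last (by apply: pow2_ge_0); last by apply: pos_INR.
by rewrite -sqrt_Rsqr_abs /Rsqr /= Rmult_1_r.
Qed.

Lemma rsum_cs1 n (e : 'I_n -> R) : rsum e <= sqrt (INR n) * enorm e.
Proof.
have := cs_sum (fun _ => 1) e.
rewrite (@rsum_ext _ (fun j => 1 * e j) e) ?(@rsum_ext _ (fun _ => 1 ^ 2) (fun _ => 1)) ?rsum_const ?Rmult_1_r //.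
  by move=> j; ring.
by move=> j; ring.
Qed.

Lemma Gf_lip N d eps L Lt (V : vec d -> R) (W : vec d -> vec d -> R) :
  0 <= eps -> 0 < L -> 0 <= Lt ->
  (forall x y, enorm (vsub (grad V x) (grad V y)) <= L * enorm (vsub x y)) ->
  (forall x y x' y', enorm (vsub (grad1 W x y) (grad1 W x' y'))
                     <= Lt * (enorm (vsub x x') + enorm (vsub y y'))) ->
  forall (y z : config N d),
  cnorm (fun i k => Gf eps V W y i k - Gf eps V W z i k)
    <= (L + 2 * eps * Lt) * cnorm (fun i k => y i k - z i k).
Proof.
move=> Heps HL HLt HVl HWl y z.
set e := fun i => enorm (vsub (y i) (z i)).
have He : forall i, 0 <= e i by move=> i; apply: enorm_ge0.
set S := rsum e.
have HS : 0 <= S by apply: rsum_ge0.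
have Hpart : forall i, enorm (fun k => Gf eps V W y i k - Gf eps V W z i k)
                      <= (L + eps * Lt) * e i + (eps * Lt / INR N) * S.
  move=> i.
  have HN : INR N <> 0.
    have H0 : (0 < N)%nat by apply: (leq_ltn_trans (leq0n _) (ltn_ord i)).
    apply: not_0_INR => E; move: H0; by rewrite E.
  have HN' : 0 < INR N by have := pos_INR N; lra.
  rewrite (enorm_ext (b := fun k => vsub (grad V (y i)) (grad V (z i)) k +
        eps / INR N * rsum (fun j => vsub (grad1 W (y i) (y j)) (grad1 W (z i) (z j)) k))); last first.
    move=> k; rewrite /Gf /vsub rsum_minus; ring.
  apply: Rle_trans (enorm_triangle _ _) _.
  rewrite enorm_scal Rabs_pos_eq; last by apply: Rdiv_le_0_compat.
  have H1 := enorm_sum (fun j => vsub (grad1 W (y i) (y j)) (grad1 W (z i) (z j))).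
  have H2 : rsum (fun j => enorm (vsub (grad1 W (y i) (y j)) (grad1 W (z i) (z j))))
            <= rsum (fun j => Lt * e i + Lt * e j).
    apply: rsum_le => j; apply: Rle_trans (HWl _ _ _ _) _; rewrite /e; lra.
  rewrite rsum_plus rsum_const rsum_scal -/S in H2.
  have H3 := HVl (y i) (z i); rewrite -/(e i) in H3.
  have Hc : 0 <= eps / INR N by apply: Rdiv_le_0_compat.
  have H4 := Rmult_le_compat_l _ _ _ Hc (Rle_trans _ _ _ H1 H2).
  have -> : (L + eps * Lt) * e i + eps * Lt / INR N * S =
            L * e i + eps / INR N * (INR N * (Lt * e i) + Lt * S) by field.
  lra.
rewrite /cnorm.
apply: Rle_trans (enorm_mono (b := fun i => (L + eps * Lt) * e i + (eps * Lt / INR N) * S) _) _.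
  move=> i; split; [apply: enorm_ge0 | apply: Hpart].
apply: Rle_trans (enorm_triangle _ _) _.
have HiN : 0 <= / INR N.
  case: (Req_dec (INR N) 0) => HN0; first by rewrite HN0 Rinv_0; lra.
  apply: Rlt_le; apply: Rinv_0_lt_compat; have := pos_INR N; lra.
have Hr1 : Rabs (L + eps * Lt) = L + eps * Lt by apply: Rabs_pos_eq; nra.
have Hr2 : Rabs (eps * Lt / INR N * S) = eps * Lt / INR N * S.
  apply: Rabs_pos_eq; rewrite /Rdiv; apply: Rmult_le_pos => //; apply: Rmult_le_pos => //; nra.
rewrite enorm_scal enorm_const Hr1 Hr2.
have Hc := rsum_cs1 e; rewrite -/S in Hc.
have -> : enorm (fun i => enorm (fun k => y i k - z i k)) = enorm e by [].
have Hee := enorm_ge0 e.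
have : sqrt (INR N) * (eps * Lt / INR N * S) <= eps * Lt * enorm e.
  case: (Req_dec (INR N) 0) => HN0.
    rewrite HN0 sqrt_0 Rmult_0_l; apply: Rmult_le_pos => //; apply: Rmult_le_pos => //.
  have HNp : 0 < INR N by have := pos_INR N; lra.
  have Hs : sqrt (INR N) * sqrt (INR N) = INR N by apply: sqrt_sqrt; lra.
  have Hcc : 0 <= eps * Lt / INR N * sqrt (INR N).
    apply: Rmult_le_pos; [apply: Rdiv_le_0_compat => //; apply: Rmult_le_pos => // | apply: sqrt_pos].
  have := Rmult_le_compat_l _ _ _ Hcc Hc.
  have -> : eps * Lt / INR N * sqrt (INR N) * (sqrt (INR N) * enorm e) = eps * Lt * enorm e.
    have -> : eps * Lt / INR N * sqrt (INR N) * (sqrt (INR N) * enorm e) = eps * Lt / INR N * (sqrt (INR N) * sqrt (INR N)) * enorm e by ring.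
    rewrite Hs; field; lra.
  lra.
nra.
Qed.

Lemma deriv_min0 (f : R -> R) l : (forall t, f 0 <= f t) -> is_derive f 0 l -> l = 0.
Proof.
move=> Hmin /is_derive_Reals Hd.
case: (Rtotal_order l 0) => [Hl|[//|Hl]].
  have Hl' : 0 < - l by lra.
  have [del Hdel] := Hd _ Hl'.
  have Hp : 0 < del / 2 by have := cond_pos del; lra.
  have := Hdel (del / 2) ltac:(lra).
  rewrite Rabs_pos_eq; last lra.
  move=> H; have := H ltac:(have := cond_pos del; lra).
  rewrite Rplus_0_l.
  have : 0 <= (f (del / 2) - f 0) / (del / 2).
    apply: Rdiv_le_0_compat => //; have := Hmin (del / 2); lra.
  move=> H1 H2.
  have := Rle_abs ((f (del / 2) - f 0) / (del / 2) - l); lra.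
have [del Hdel] := Hd _ Hl.
have Hp : 0 < del / 2 by have := cond_pos del; lra.
have := Hdel (- (del / 2)) ltac:(lra).
rewrite Rabs_Ropp Rabs_pos_eq; last lra.
move=> H; have := H ltac:(have := cond_pos del; lra).
rewrite Rplus_0_l.
have : (f (- (del / 2)) - f 0) / - (del / 2) <= 0.
  have -> : (f (- (del / 2)) - f 0) / - (del / 2) = - ((f (- (del / 2)) - f 0) / (del / 2)) by field; lra.
  have : 0 <= (f (- (del / 2)) - f 0) / (del / 2).
    apply: Rdiv_le_0_compat => //; have := Hmin (- (del / 2)); lra.
  lra.
move=> H1 H2.
rewrite Rabs_minus_sym in H2.
have := Rle_abs (l - (f (- (del / 2)) - f 0) / - (del / 2)); lra.
Qed.

Lemma Gf_zero N d eps (V : vec d -> R) (W : vec d -> vec d -> R) :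
  0 <= eps ->
  (forall x k, ex_derive (fun t => V (shift x k t)) 0) ->
  V (@vzero d) = 0 -> (forall x, 0 <= V x) ->
  cnorm (Gf eps V W (fun _ _ => 0 : R) : config N d)
    = sqrt (INR N) * (eps * enorm (grad1 W (@vzero d) (@vzero d))).
Proof.
move=> Heps HV HV0 HVp.
have HgV : forall k, grad V (@vzero d) k = 0.
  move=> k; apply: (deriv_min0 (f := fun t => V (shift (@vzero d) k t))).
    by move=> t; rewrite shift0 HV0.
  apply: Derive_correct; apply: HV.
rewrite /cnorm (enorm_ext (b := fun _ => eps * enorm (grad1 W (@vzero d) (@vzero d)))).
  rewrite enorm_const Rabs_pos_eq //; apply: Rmult_le_pos => //; apply: enorm_ge0.
move=> i.
have HN : INR N <> 0.
  have H0 : (0 < N)%nat by apply: (leq_ltn_trans (leq0n _) (ltn_ord i)).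
  apply: not_0_INR => E; move: H0; by rewrite E.
rewrite (enorm_ext (b := fun k => eps * grad1 W (@vzero d) (@vzero d) k)).
  by rewrite enorm_scal Rabs_pos_eq.
move=> k; rewrite /Gf; change (fun _ : 'I_d => 0) with (@vzero d); rewrite HgV rsum_const; field; exact: HN.
Qed.

Lemma lip_continuous (f : R -> R) C s : 0 <= C ->
  (forall s s', Rabs (f s - f s') <= C * Rabs (s - s')) -> continuous f s.
Proof.
move=> HC Hl; apply/filterlim_locally => e.
have Hd : 0 < e / (C + 1) by apply: Rdiv_lt_0_compat; [apply: cond_pos | lra].
exists (mkposreal _ Hd) => y Hy.
move: Hy; rewrite /ball /= /AbsRing_ball /abs /minus /plus /opp /= => Hy.
apply: Rle_lt_trans (Hl y s) _.
have He := cond_pos e.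
have Hy' : Rabs (y - s) < e / (C + 1) by exact: Hy.
have : C * Rabs (y - s) <= C * (e / (C + 1)) by apply: Rmult_le_compat_l; lra.
have : C * (e / (C + 1)) < e.
  have -> : C * (e / (C + 1)) = e - e / (C + 1) by field; lra.
  lra.
lra.
Qed.

Definition csub N d (y z : config N d) : config N d := fun i k => y i k - z i k.
Definition czero N d : config N d := fun _ _ => 0.

Lemma cnorm_sub_triangle N d (y z w : config N d) :
  cnorm (csub y w) <= cnorm (csub y z) + cnorm (csub z w).
Proof.
rewrite /csub; apply: Rle_trans (cnorm_triangle _ _).
by rewrite (cnorm_ext (z := fun i k => (y i k - z i k) + (z i k - w i k))) //; [lra | move=> i k; ring].
Qed.

Section Flow.
Variables (N d : nat) (F : config N d -> config N d) (K B0 h : R) (x v : config N d)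
  (q p : R -> config N d).
Hypothesis HK : 0 < K.
Hypothesis Hh : 0 < h.
Hypothesis HKh : K * h ^ 2 <= 1 / 9.
Hypothesis HF : forall y z, cnorm (csub (F y) (F z)) <= K * cnorm (csub y z).
Hypothesis HF0 : cnorm (F (@czero N d)) <= B0.
Hypothesis Hflow : is_flow F x v q p.

Definition line s : config N d := caxpy x s v.
Definition Phi (t : R) : config N d := fun i k => RInt (fun s => F (line s) i k) 0 t.

Lemma line_lip s s' : cnorm (csub (line s) (line s')) = Rabs (s - s') * cnorm v.
Proof.
rewrite -cnorm_scal; apply: cnorm_ext => i k; rewrite /csub /line /caxpy; ring.
Qed.

Lemma Fline_cont i k s : continuous (fun s => F (line s) i k) s.
Proof.
apply: (@lip_continuous _ (K * cnorm v)).
  apply: Rmult_le_pos; [lra | apply: cnorm_ge0].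
move=> s1 s2.
apply: Rle_trans (cnorm_coord (csub (F (line s1)) (F (line s2))) i k) _.
apply: Rle_trans (HF _ _) _; rewrite line_lip; nra.
Qed.

Lemma Phi_deriv i k t : is_derive (fun t => Phi t i k) t (F (line t) i k).
Proof.
apply: (is_derive_RInt (fun s => F (line s) i k) (fun t => Phi t i k) 0 t).
  apply: filter_forall => b; apply: RInt_correct; apply: ex_RInt_continuous => z _.
  exact: Fline_cont.
exact: Fline_cont.
Qed.

Lemma Phi0 i k : Phi 0 i k = 0.
Proof. by rewrite /Phi RInt_point. Qed.

Lemma F_growth y : cnorm (F y) <= K * cnorm y + B0.
Proof.
have H1 : cnorm (F y) <= cnorm (csub (F y) (F (@czero N d))) + cnorm (F (@czero N d)).
  apply: Rle_trans (cnorm_triangle _ _).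
  rewrite (cnorm_ext (z := fun i k => csub (F y) (F (@czero N d)) i k + F (@czero N d) i k)); first lra.
  move=> i k; rewrite /csub; ring.
have H2 := HF y (@czero N d).
rewrite (cnorm_ext (y := csub y (@czero N d)) (z := y)) in H2; last by move=> i k; rewrite /csub /czero; ring.
lra.
Qed.

Lemma cnorm_sqrt (y : config N d) :
  cnorm y = sqrt (rsum (fun i => rsum (fun k => y i k ^ 2))).
Proof.
rewrite -(sqrt_pow2 (cnorm y)); last by apply: cnorm_ge0.
by rewrite cnorm_sq.
Qed.

Lemma q_max : exists M, 0 <= M /\ (forall s, 0 <= s <= h -> cnorm (csub (q s) x) <= M) /\
   exists s0, 0 <= s0 <= h /\ M = cnorm (csub (q s0) x).
Proof.
case: Hflow => Hq0 [Hp0 [Hqd Hpd]].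
set g := fun s => rsum (fun i => rsum (fun k => (q s i k - x i k) ^ 2)).
have Hg : forall s, continuity_pt g s.
  move=> s; apply: (@D_cont _ _ (rsum (fun i => rsum (fun k => 2 * (q s i k - x i k) * p s i k)))).
  apply: (is_derive_rsum (F := fun i s => rsum (fun k => (q s i k - x i k) ^ 2))
          (F' := fun i s => rsum (fun k => 2 * (q s i k - x i k) * p s i k))) => i.
  apply: (is_derive_rsum (F := fun k s => (q s i k - x i k) ^ 2)
          (F' := fun k s => 2 * (q s i k - x i k) * p s i k)) => k.
  have Hd : is_derive (fun s => q s i k - x i k) s (p s i k - 0).
    apply: D_minus; [apply: Hqd | apply: D_const].
  apply: (D_ext (f := fun s => (q s i k - x i k) * (q s i k - x i k))).
    move=> t; ring.
  apply: D_val; first exact: (D_mult Hd Hd).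
  rewrite /=; ring.
have [s0 [Hs0 Hs0']] := continuity_ab_maj g 0 h (Rlt_le _ _ Hh) (fun c _ => Hg c).
exists (cnorm (csub (q s0) x)); split; first by apply: cnorm_ge0.
split; last by exists s0.
move=> s Hs; rewrite !cnorm_sqrt; apply: sqrt_le_1_alt; exact: (Hs0 s Hs).
Qed.

Lemma vmvt0 T (g g' : R -> config N d) (b b' : R -> R) : 0 <= T ->
  (forall i k, g 0 i k = 0) ->
  (forall s, 0 <= s <= T -> forall i k, is_derive (fun s => g s i k) s (g' s i k)) ->
  (forall s, 0 <= s <= T -> is_derive b s (b' s)) ->
  (forall s, 0 <= s <= T -> cnorm (g' s) <= b' s) ->
  cnorm (g T) <= b T - b 0.
Proof.
move=> HT H0 Hg Hb Hn; have := vmvt HT Hg Hb Hn.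
by rewrite (cnorm_ext (z := g T)) // => i k; rewrite H0; ring.
Qed.

Lemma flow_main : exists M, 0 <= M /\
  M <= (K * (cnorm x + M) + B0) * h ^ 2 / 2 + h * cnorm v /\
  cnorm (fun i k => v i k - Phi h i k - p h i k) <= K * (K * (cnorm x + M) + B0) * h ^ 3 / 6 /\
  cnorm (fun i k => x i k + h * v i k - h / 2 * Phi h i k - q h i k)
    <= K * (K * (cnorm x + M) + B0) * h ^ 4 / 24 + K * cnorm v * h ^ 3 / 12.
Proof.
case: q_max => M [HM0 [HMs [s0 [Hs0 HMe]]]].
case: Hflow => Hq0 [Hp0 [Hqd Hpd]].
exists M; split => //.
set A := K * (cnorm x + M) + B0.
set Vn := cnorm v.
have HVn : 0 <= Vn by apply: cnorm_ge0.
have HB0 : 0 <= B0 by apply: Rle_trans HF0; apply: cnorm_ge0.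
have HA : 0 <= A by have := cnorm_ge0 x; rewrite /A; nra.
have HFq : forall s, 0 <= s <= h -> cnorm (F (q s)) <= A.
  move=> s Hs; apply: Rle_trans (F_growth _) _.
  have : cnorm (q s) <= cnorm x + M.
    rewrite (cnorm_ext (z := fun i k => x i k + csub (q s) x i k)); last by move=> i k; rewrite /csub; ring.
    apply: Rle_trans (cnorm_triangle _ _) _.
    have := HMs s Hs; lra.
  rewrite /A; nra.
have HP : forall t, 0 <= t <= h -> cnorm (csub (p t) v) <= A * t.
  move=> t Ht.
  have := vmvt0 (T := t) (g := fun s i k => p s i k - v i k) (g' := fun s i k => - F (q s) i k)
     (b := fun s => A * s) (b' := fun _ => A) _ _ _ _ _.
  rewrite Rmult_0_r Rminus_0_r; apply.
  - lra.
  - by move=> i k; rewrite Hp0; ring.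
  - move=> s Hs i k; apply: D_val; first by apply: D_minus; [apply: Hpd | apply: D_const].
    ring.
  - move=> s Hs; auto_derive; [exact I | ring].
  - move=> s Hs; rewrite (cnorm_ext (z := fun i k => (-1) * F (q s) i k)); last by move=> i k; ring.
    rewrite cnorm_scal Rabs_Ropp Rabs_R1 Rmult_1_l; apply: HFq; lra.
have HR : forall t, 0 <= t <= h -> cnorm (fun i k => q t i k - x i k - t * v i k) <= A * t ^ 2 / 2.
  move=> t Ht.
  have := vmvt0 (T := t) (g := fun s i k => q s i k - x i k - s * v i k) (g' := fun s i k => p s i k - v i k)
     (b := fun s => A * s ^ 2 / 2) (b' := fun s => A * s) _ _ _ _ _.
  have -> : A * t ^ 2 / 2 - A * 0 ^ 2 / 2 = A * t ^ 2 / 2 by field.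
  apply.
  - lra.
  - by move=> i k; rewrite Hq0; ring.
  - move=> s Hs i k; apply: D_val.
      apply: D_minus; [apply: D_minus; [apply: Hqd | apply: D_const] | apply: D_mulc; apply: D_id].
    ring.
  - move=> s Hs; auto_derive; [exact I | field].
  - move=> s Hs; apply: Rle_trans (HP s _) _; [lra | lra].
have HMb : M <= A * h ^ 2 / 2 + h * Vn.
  rewrite HMe.
  have H1 : cnorm (csub (q s0) x) <= cnorm (fun i k => q s0 i k - x i k - s0 * v i k) + cnorm (fun i k => s0 * v i k).
    rewrite (cnorm_ext (z := fun i k => (q s0 i k - x i k - s0 * v i k) + s0 * v i k)); last by move=> i k; rewrite /csub; ring.
    apply: (cnorm_triangle (fun i k => q s0 i k - x i k - s0 * v i k) (fun i k => s0 * v i k)).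
  rewrite cnorm_scal Rabs_pos_eq in H1; last lra.
  have := HR s0 Hs0.
  have : A * s0 ^ 2 / 2 <= A * h ^ 2 / 2.
    apply: Rmult_le_compat_r; first lra. apply: Rmult_le_compat_l => //; apply: pow_incr; lra.
  have : s0 * Vn <= h * Vn by apply: Rmult_le_compat_r; lra.
  rewrite -/Vn in H1; lra.
split; first by exact: HMb.
have HeP : forall t, 0 <= t <= h -> cnorm (fun i k => v i k - Phi t i k - p t i k) <= K * A * t ^ 3 / 6.
  move=> t Ht.
  have := vmvt0 (T := t) (g := fun s i k => v i k - Phi s i k - p s i k)
     (g' := fun s i k => F (q s) i k - F (line s) i k)
     (b := fun s => K * A * s ^ 3 / 6) (b' := fun s => K * A * s ^ 2 / 2) _ _ _ _ _.
  have -> : K * A * t ^ 3 / 6 - K * A * 0 ^ 3 / 6 = K * A * t ^ 3 / 6 by field.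
  apply.
  - lra.
  - by move=> i k; rewrite Phi0 Hp0; ring.
  - move=> s Hs i k; apply: D_val.
      apply: D_minus; [apply: D_minus; [apply: D_const | apply: Phi_deriv] | apply: Hpd].
    ring.
  - move=> s Hs; auto_derive; [exact I | field].
  - move=> s Hs; apply: Rle_trans (HF _ _) _.
    rewrite (cnorm_ext (z := fun i k => q s i k - x i k - s * v i k)); last by move=> i k; rewrite /csub /line /caxpy; ring.
    have := HR s ltac:(lra).
    have -> : K * A * s ^ 2 / 2 = K * (A * s ^ 2 / 2) by field.
    move=> H; apply: Rmult_le_compat_l => //; lra.
split; first by apply: HeP; lra.
have HPhi : forall t, 0 <= t <= h -> cnorm (fun i k => Phi t i k - t * F (line t) i k) <= K * Vn * t ^ 2 / 2.
  move=> t Ht.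
  have := vmvt0 (T := t) (g := fun s i k => Phi s i k - s * F (line t) i k)
     (g' := fun s i k => F (line s) i k - F (line t) i k)
     (b := fun s => - (K * Vn * (t - s) ^ 2 / 2)) (b' := fun s => K * Vn * (t - s)) _ _ _ _ _.
  have -> : - (K * Vn * (t - t) ^ 2 / 2) - - (K * Vn * (t - 0) ^ 2 / 2) = K * Vn * t ^ 2 / 2 by field.
  apply.
  - lra.
  - by move=> i k; rewrite Phi0; ring.
  - move=> s Hs i k; apply: D_val.
      apply: D_minus; [apply: Phi_deriv | apply: D_mulc; apply: D_id].
    ring.
  - move=> s Hs; auto_derive; [exact I | field].
  - move=> s Hs; apply: Rle_trans (HF _ _) _.
    rewrite line_lip Rabs_minus_sym Rabs_pos_eq; last lra.
    rewrite -/Vn; apply: Req_le; ring.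
have HeQ' : forall s, 0 <= s <= h ->
   cnorm (fun i k => v i k - (1 / 2 * Phi s i k + s / 2 * F (line s) i k) - p s i k)
     <= K * A * s ^ 3 / 6 + K * Vn * s ^ 2 / 4.
  move=> s Hs.
  rewrite (cnorm_ext (z := fun i k => (v i k - Phi s i k - p s i k) + 1 / 2 * (Phi s i k - s * F (line s) i k))); last by move=> i k; field.
  apply: Rle_trans (cnorm_triangle (fun i k => v i k - Phi s i k - p s i k)
                      (fun i k => 1 / 2 * (Phi s i k - s * F (line s) i k))) _.
  rewrite cnorm_scal Rabs_pos_eq; last lra.
  have := HeP s Hs; have := HPhi s Hs; lra.
have := vmvt0 (T := h) (g := fun s i k => x i k + s * v i k - s / 2 * Phi s i k - q s i k)
     (g' := fun s i k => v i k - (1 / 2 * Phi s i k + s / 2 * F (line s) i k) - p s i k)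
     (b := fun s => K * A * s ^ 4 / 24 + K * Vn * s ^ 3 / 12)
     (b' := fun s => K * A * s ^ 3 / 6 + K * Vn * s ^ 2 / 4) _ _ _ _ _.
have -> : K * A * h ^ 4 / 24 + K * Vn * h ^ 3 / 12 - (K * A * 0 ^ 4 / 24 + K * Vn * 0 ^ 3 / 12)
          = K * A * h ^ 4 / 24 + K * Vn * h ^ 3 / 12 by field.
apply.
- lra.
- by move=> i k; rewrite Phi0 Hq0; ring.
- move=> s Hs i k; apply: D_val.
    apply: D_minus; last by apply: Hqd.
    apply: D_minus; first by apply: D_plus; [apply: D_const | apply: D_mulc; apply: D_id].
    apply: (D_mult (f := fun s => s / 2)); last by apply: Phi_deriv.
    auto_derive; [exact I | reflexivity].
  rewrite /=; field.
- move=> s Hs; auto_derive; [exact I | field].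
- exact: HeQ'.
Qed.

End Flow.

Lemma num_core t X Y b M : 0 < t -> t ^ 2 <= 1 / 9 -> 0 <= X -> 0 <= Y -> 0 <= b -> 0 <= M ->
  M <= (X + M + b) * t ^ 2 / 2 + t * Y ->
  (t ^ 4 * (X + M + b) / 24 + t ^ 3 * Y / 12) ^ 2 + (t ^ 3 * (X + M + b) / 6) ^ 2
    <= 7 * t ^ 6 * (X ^ 2 + Y ^ 2 + b ^ 2 / 3).
Proof.
intros Ht Ht2 HX HY Hb HM HMb.
assert (Ht3 : t <= 1 / 3) by nra.
set (Z := X + M + b) in *.
assert (HZ : 0 <= Z) by (unfold Z; lra).
assert (H1 : (X + M + b) * t ^ 2 / 2 <= Z / 18).
  { fold Z. assert (Z * t ^ 2 <= Z * (1/9)) by (apply Rmult_le_compat_l; lra). lra. }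
assert (H2 : t * Y <= Y / 3) by nra.
assert (HM2 : M <= (X + b) / 17 + 6 * Y / 17) by (unfold Z in *; lra).
set (U := X + Y + b).
assert (HZU : Z <= 11 / 10 * U) by (unfold Z, U; lra).
assert (HU : 0 <= U) by (unfold U; lra).
assert (HZ2 : Z ^ 2 <= 121 / 100 * U ^ 2).
  { assert (Z ^ 2 <= (11 / 10 * U) ^ 2) by (apply pow_incr; lra).
    replace (121 / 100 * U ^ 2) with ((11 / 10 * U) ^ 2) by field. exact H. }
assert (HU2 : U ^ 2 <= 3 * (X ^ 2 + Y ^ 2 + b ^ 2)).
  { assert (0 <= (X - Y) ^ 2) by apply pow2_ge_0.
    assert (0 <= (Y - b) ^ 2) by apply pow2_ge_0.
    assert (0 <= (X - b) ^ 2) by apply pow2_ge_0.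
    unfold U. lra. }
assert (HE : t * Z / 24 + Y / 12 <= U / 10).
  { assert (t * Z <= Z / 3) by nra. unfold U in *. lra. }
assert (HE0 : 0 <= t * Z / 24 + Y / 12).
  { assert (0 <= t * Z) by (apply Rmult_le_pos; lra). lra. }
assert (HE2 : (t * Z / 24 + Y / 12) ^ 2 <= U ^ 2 / 100).
  { assert ((t * Z / 24 + Y / 12) ^ 2 <= (U / 10) ^ 2) by (apply pow_incr; lra).
    replace (U ^ 2 / 100) with ((U / 10) ^ 2) by field. exact H. }
assert (Hin : (t * Z / 24 + Y / 12) ^ 2 + Z ^ 2 / 36 <= 7 * (X ^ 2 + Y ^ 2 + b ^ 2 / 3)).
  { assert (0 <= X^2) by nra. assert (0 <= Y^2) by nra. assert (0 <= b^2) by nra. nra. }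
replace ((t ^ 4 * Z / 24 + t ^ 3 * Y / 12) ^ 2 + (t ^ 3 * Z / 6) ^ 2)
  with (t ^ 6 * ((t * Z / 24 + Y / 12) ^ 2 + Z ^ 2 / 36)) by (field).
replace (7 * t ^ 6 * (X ^ 2 + Y ^ 2 + b ^ 2 / 3)) with (t ^ 6 * (7 * (X ^ 2 + Y ^ 2 + b ^ 2 / 3))) by ring.
apply Rmult_le_compat_l; [apply pow_le; lra | exact Hin].
Qed.

Lemma num_final Le h X Vn B0 M EQ EP : 0 < Le -> 0 < h -> Le * h ^ 2 <= 1 / 9 ->
  0 <= X -> 0 <= Vn -> 0 <= B0 -> 0 <= M -> 0 <= EQ -> 0 <= EP ->
  M <= (Le * (X + M) + B0) * h ^ 2 / 2 + h * Vn ->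
  EP <= Le * (Le * (X + M) + B0) * h ^ 3 / 6 ->
  EQ <= Le * (Le * (X + M) + B0) * h ^ 4 / 24 + Le * Vn * h ^ 3 / 12 ->
  EQ ^ 2 + / Le * EP ^ 2 <= 7 * (Le * h ^ 2) ^ 3 * (X ^ 2 + / Le * Vn ^ 2 + B0 ^ 2 / (3 * Le ^ 2)).
Proof.
intros HLe Hh Hah HX HVn HB0 HM HEQ HEP HMb HPb HQb.
set (w := sqrt Le).
assert (Hw : 0 < w) by (apply sqrt_lt_R0; lra).
assert (HLw : Le = w ^ 2) by (unfold w; rewrite pow2_sqrt; lra).
rewrite HLw in HLe Hah HMb HPb HQb *.
set (t := w * h).
assert (Ht : 0 < t) by (unfold t; nra).
assert (Ht2 : t ^ 2 <= 1 / 9) by (unfold t; replace ((w*h)^2) with (w^2 * h^2) by ring; lra).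
assert (HY : 0 <= Vn / w) by (unfold Rdiv; apply Rmult_le_pos; [lra| apply Rlt_le, Rinv_0_lt_compat; lra]).
assert (Hb : 0 <= B0 / w ^ 2) by (unfold Rdiv; apply Rmult_le_pos; [lra| apply Rlt_le, Rinv_0_lt_compat; nra]).
assert (H := @num_core t X (Vn / w) (B0 / w ^ 2) M Ht Ht2 HX HY Hb HM).
assert (HMb' : M <= (X + M + B0 / w ^ 2) * t ^ 2 / 2 + t * (Vn / w)).
  { replace ((X + M + B0 / w ^ 2) * t ^ 2 / 2 + t * (Vn / w))
      with ((w ^ 2 * (X + M) + B0) * h ^ 2 / 2 + h * Vn) by (unfold t; field; lra).
    exact HMb. }
specialize (H HMb').
assert (HQ2 : EQ ^ 2 <= (t ^ 4 * (X + M + B0 / w ^ 2) / 24 + t ^ 3 * (Vn / w) / 12) ^ 2).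
  { replace (t ^ 4 * (X + M + B0 / w ^ 2) / 24 + t ^ 3 * (Vn / w) / 12)
      with (w ^ 2 * (w ^ 2 * (X + M) + B0) * h ^ 4 / 24 + w ^ 2 * Vn * h ^ 3 / 12) by (unfold t; field; lra).
    apply pow_incr; lra. }
assert (HP2 : / w ^ 2 * EP ^ 2 <= (t ^ 3 * (X + M + B0 / w ^ 2) / 6) ^ 2).
  { replace ((t ^ 3 * (X + M + B0 / w ^ 2) / 6) ^ 2)
      with (/ w ^ 2 * (w ^ 2 * (w ^ 2 * (X + M) + B0) * h ^ 3 / 6) ^ 2) by (unfold t; field; lra).
    apply Rmult_le_compat_l; [apply Rlt_le, Rinv_0_lt_compat; nra | apply pow_incr; lra]. }
replace (7 * (w ^ 2 * h ^ 2) ^ 3 * (X ^ 2 + / w ^ 2 * Vn ^ 2 + B0 ^ 2 / (3 * (w ^ 2) ^ 2)))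
  with (7 * t ^ 6 * (X ^ 2 + (Vn / w) ^ 2 + (B0 / w ^ 2) ^ 2 / 3)) by (unfold t; field; lra).
lra.
Qed.

Lemma RInt_affine (g : R -> R) c a : ex_RInt g 0 1 ->
  RInt (fun u => c - a * g u) 0 1 = c - a * RInt g 0 1.
Proof.
move=> Hex; apply: is_RInt_unique.
have H := is_RInt_minus _ _ _ _ _ _ (is_RInt_const 0 1 c) (is_RInt_scal _ _ _ a _ (RInt_correct _ _ _ Hex)).
have -> : c - a * RInt g 0 1 = minus (scal (1 - 0) c) (scal a (RInt g 0 1)).
  rewrite /minus /plus /opp /scal /= /mult /=; ring.
exact: H.
Qed.

Lemma Phi_lin N d (F : config N d -> config N d) K h x v l k : 0 < K ->
  (forall y z, cnorm (csub (F y) (F z)) <= K * cnorm (csub y z)) ->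
  ex_RInt (fun u => h * F (caxpy x (h * u) v) l k) 0 1 /\
  RInt (fun u => h * F (caxpy x (h * u) v) l k) 0 1 = Phi F x v h l k.
Proof.
move=> HK HF.
have Hc : forall s, continuous (fun s => F (line x v s) l k) s.
  move=> s; have := @Fline_cont N d F K x v HK HF l k s; exact.
have Hex : ex_RInt (fun s => F (line x v s) l k) (h * 0 + 0) (h * 1 + 0).
  by apply: ex_RInt_continuous => z _; apply: Hc.
have E := RInt_comp_lin (fun s => F (line x v s) l k) h 0 0 1 Hex.
have Hex2 : ex_RInt (fun u => h * F (caxpy x (h * u) v) l k) 0 1.
  apply: ex_RInt_continuous => z _.
  apply: (continuous_ext (fun u => scal h ((fun s => F (line x v s) l k) (h * u + 0)))).
    by move=> u; rewrite Rplus_0_r.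
  apply: (continuous_scal_r h (fun u => (fun s => F (line x v s) l k) (h * u + 0))).
  apply: (continuous_comp (fun u => h * u + 0) (fun s => F (line x v s) l k)); last exact: Hc.
  apply: (continuous_plus (fun u => mult h u) (fun _ => 0)).
    apply: (continuous_mult (fun _ => h) (fun u => u)); [apply: continuous_const | apply: continuous_id].
  apply: continuous_const.
split => //.
have E0 : h * 0 + 0 = 0 by ring.
have E1 : h * 1 + 0 = h by ring.
rewrite E0 E1 in E; rewrite /Phi -E; apply: RInt_ext => u _; rewrite Rplus_0_r //.
Qed.

Theorem mainTheorem14 (d N : nat) (eps L Lt h : R)
  (V : vec d -> R) (W : vec d -> vec d -> R) :
  0 <= eps -> 0 < L -> 0 <= Lt ->
  isC1 V -> isC1_2 W ->
  V (@vzero d) = 0 -> (forall x, 0 <= V x) ->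
  (forall x y, enorm (vsub (grad V x) (grad V y)) <= L * enorm (vsub x y)) ->
  (forall x y, W x y = W y x) ->
  (forall x y x' y', enorm (vsub (grad1 W x y) (grad1 W x' y'))
                     <= Lt * (enorm (vsub x x') + enorm (vsub y y'))) ->
  0 < h -> (L + 2 * eps * Lt) * h ^ 2 <= 1 / 9 ->
  forall (x v : config N d) (q p : R -> config N d),
  is_flow (cgrad (Upot eps V W)) x v q p ->
  let Le := L + 2 * eps * Lt in
  let W0 := enorm (grad1 W (@vzero d) (@vzero d)) in
  rsum (fun l => tnorm2 Le
          (vsub (EQh (cgrad (Upot eps V W)) h x v l) (q h l))
          (vsub (EPh (cgrad (Upot eps V W)) h x v l) (p h l)))
  <= 7 * (Le * h ^ 2) ^ 3 *
     rsum (fun l => tnorm2 Le (x l) (v l) + 1 / 3 * / Le ^ 2 * eps ^ 2 * W0 ^ 2).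
Proof.
move=> Heps HL HLt [HV1 _] [HW1 _] HV0 HVpos HVlip Hsym HWlip Hh Hah x v q p Hflow Le W0.
set F := cgrad (Upot eps V W).
have HFG : forall y i k, F y i k = Gf eps V W y i k.
  move=> y i k; exact: (cgrad_U eps HLt HV1 HW1 Hsym HWlip).
have HLe : 0 < Le.
  rewrite /Le; have : 0 <= eps * Lt by apply: Rmult_le_pos.
  lra.
have HF : forall y z, cnorm (csub (F y) (F z)) <= Le * cnorm (csub y z).
  move=> y z.
  rewrite (cnorm_ext (z := fun i k => Gf eps V W y i k - Gf eps V W z i k)); last by move=> i k; rewrite /csub !HFG.
  exact: (Gf_lip Heps HL HLt HVlip HWlip y z).
set B0 := sqrt (INR N) * (eps * W0).
have HF0 : cnorm (F (@czero N d)) <= B0.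
  rewrite (cnorm_ext (z := Gf eps V W (fun _ _ => 0 : R))); last by move=> i k; rewrite HFG.
  rewrite (Gf_zero N W Heps HV1 HV0 HVpos); rewrite /B0 /W0; lra.
have [M [HM0 [HMb [HP HQ]]]] := flow_main HLe Hh HF HF0 Hflow.
have HEP : forall l k, EPh F h x v l k = v l k - Phi F x v h l k.
  move=> l k; have [Hex HR] := Phi_lin h x v l k HLe HF.
  rewrite /EPh (RInt_ext _ (fun u => v l k - 1 * (h * F (caxpy x (h * u) v) l k))); last by move=> u _; change (v l k - h * F (caxpy x (h * u) v) l k = v l k - 1 * (h * F (caxpy x (h * u) v) l k)); ring.
  rewrite RInt_affine // HR; ring.
have HEQ : forall l k, EQh F h x v l k = x l k + h * v l k - h / 2 * Phi F x v h l k.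
  move=> l k; have [Hex HR] := Phi_lin h x v l k HLe HF.
  rewrite /EQh (RInt_ext _ (fun u => (x l k + h * v l k) - h / 2 * (h * F (caxpy x (h * u) v) l k))); last first.
    by move=> u _; change (x l k + h * v l k - h ^ 2 / 2 * F (caxpy x (h * u) v) l k = (x l k + h * v l k) - h / 2 * (h * F (caxpy x (h * u) v) l k)); field.
  by rewrite RInt_affine // HR.
set eQ := fun i k => x i k + h * v i k - h / 2 * Phi F x v h i k - q h i k.
set eP := fun i k => v i k - Phi F x v h i k - p h i k.
have -> : rsum (fun l => tnorm2 Le (vsub (EQh F h x v l) (q h l)) (vsub (EPh F h x v l) (p h l)))
          = cnorm eQ ^ 2 + / Le * cnorm eP ^ 2.
  rewrite !cnorm_sq -rsum_scal -rsum_plus; apply: rsum_ext => l.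
  rewrite /tnorm2; f_equal; [|f_equal]; apply: rsum_ext => k; by rewrite /vsub ?HEQ ?HEP.
have -> : rsum (fun l => tnorm2 Le (x l) (v l) + 1 / 3 * / Le ^ 2 * eps ^ 2 * W0 ^ 2)
          = cnorm x ^ 2 + / Le * cnorm v ^ 2 + B0 ^ 2 / (3 * Le ^ 2).
  rewrite rsum_plus rsum_const !cnorm_sq -rsum_scal -rsum_plus /tnorm2.
  have -> : B0 ^ 2 = INR N * (eps ^ 2 * W0 ^ 2).
    rewrite /B0 (_ : (sqrt (INR N) * (eps * W0)) ^ 2 = (sqrt (INR N)) ^ 2 * (eps ^ 2 * W0 ^ 2)); last by ring.
    rewrite pow2_sqrt //; apply: pos_INR.
  field; lra.
apply: (@num_final Le h (cnorm x) (cnorm v) B0 M (cnorm eQ) (cnorm eP)) => //.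
- exact: cnorm_ge0.
- exact: cnorm_ge0.
- rewrite /B0; apply: Rmult_le_pos; [apply: sqrt_pos | apply: Rmult_le_pos => //; apply: enorm_ge0].
- exact: cnorm_ge0.
- exact: cnorm_ge0.

Qed.
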